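(* Let $\sigma>0$ and $h:[0,\sigma)\to\mathbb{R}^+$ be continuous, strictly increasing, with $\lim_{s\to\sigma^-}h(s)=+\infty$, and suppose there exists $\gamma\in[1,2)$ with $\lim_{s\to\sigma^-}(\sigma-s)^\gamma h(s)=C>0$. Let $H(s)=\int_0^s h(t)\,dt$, $\psi(s)=\int_0^s e^{-H(t)}\,dt$ for $s\in[0,\sigma]$, $L=\psi(\sigma)$ (so $\psi:[0,\sigma]\to[0,L]$ is increasing and invertible), and $g(s)=e^{-H(\psi^{-1}(s))}$ for $s\in[0,L]$ (with $g(L)=0$). Then: (i) $g(0)=1$ and $g(L)=0$; (ii) $g$ is decreasing; (iii) $\lim_{s\to L^-}g'(s)=-\infty$; (iv) $\displaystyle\int_0^L\frac{dt}{\sqrt{\int_t^L g(s)\,ds}}<+\infty.$ *)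

(* Defs.v *)
From Stdlib Require Import Reals Lra ClassicalEpsilon.
From Coquelicot Require Import Coquelicot.
Open Scope R_scope.

Definition Hf (h : R -> R) (s : R) : R := RInt h 0 s.

(* e^{-H(t)} for t < sigma, and 0 at t >= sigma (convention e^{-H(sigma)} = 0,
   since H(s) -> +oo as s -> sigma^-). *)
Definition Ef (h : R -> R) (sigma t : R) : R :=
  if Rlt_dec t sigma then exp (- Hf h t) else 0.

Definition psi (h : R -> R) (sigma s : R) : R := RInt (Ef h sigma) 0 s.

Definition Lval (h : R -> R) (sigma : R) : R := psi h sigma sigma.

Definition psi_inv (h : R -> R) (sigma s : R) : R :=
  epsilon (inhabits 0) (fun t => 0 <= t <= sigma /\ psi h sigma t = s).

Definition gf (h : R -> R) (sigma s : R) : R := Ef h sigma (psi_inv h sigma s).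

(* Main.v *)
Require Import Defs.
From Stdlib Require Import Reals.
From Coquelicot Require Import Coquelicot.
From Stdlib Require Import Lra ClassicalEpsilon Classical.
Open Scope R_scope.

Lemma ball_R (x e y : R) : ball x e y <-> Rabs (y - x) < e.
Proof. unfold ball; simpl; unfold AbsRing_ball, abs, minus, plus, opp; simpl. tauto. Qed.

Lemma cont_eps (f : R -> R) z : continuous f z <->
  (forall eps, 0 < eps -> exists d, 0 < d /\ forall x, Rabs (x - z) < d -> Rabs (f x - f z) < eps).
Proof.
  unfold continuous; rewrite filterlim_locally; split.
  - intros H eps Heps. destruct (H (mkposreal eps Heps)) as [d Hd].
    exists d; split; [apply cond_pos|]. intros x Hx.
    apply (ball_R (f z) eps (f x)). apply Hd. apply ball_R. exact Hx.
  - intros H eps. destruct (H eps (cond_pos eps)) as [d [Hd0 Hd]].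
    exists (mkposreal d Hd0). intros y Hy. apply ball_R. apply Hd. apply ball_R. exact Hy.
Qed.

Definition WC (f : R -> R) a b z := forall eps, 0 < eps -> exists d, 0 < d /\
  forall x, a <= x <= b -> Rabs (x - z) < d -> Rabs (f x - f z) < eps.
Definition WCon f a b := forall z, a <= z <= b -> WC f a b z.

Lemma cont_WC f a b z : continuous f z -> WC f a b z.
Proof. rewrite cont_eps. intros H eps He. destruct (H eps He) as [d [Hd H']].
  exists d; split; auto. Qed.

Lemma WC_cont_int f a b z : a < z < b -> WC f a b z -> continuous f z.
Proof. intros Hz H. apply cont_eps. intros eps He. destruct (H eps He) as [d [Hd H']].
  exists (Rmin d (Rmin (z - a) (b - z))). split.
  { repeat apply Rmin_pos; lra. }
  intros x Hx. apply H'.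
    pose proof (Rmin_r d (Rmin (z - a) (b - z))). pose proof (Rmin_l (z-a) (b-z)).
    pose proof (Rmin_r (z-a) (b-z)). apply Rabs_def2 in Hx. lra.
  - pose proof (Rmin_l d (Rmin (z - a) (b - z))). lra.
Qed.

Lemma WC_sub f a b a' b' z : a <= a' -> b' <= b -> WC f a b z -> WC f a' b' z.
Proof. intros H1 H2 H eps He. destruct (H eps He) as [d [Hd H']].
  exists d; split; auto. intros x Hx. apply H'. lra. Qed.

Lemma WC_ext f g a b z : (forall x, a <= x <= b -> f x = g x) -> a <= z <= b ->
  WC f a b z -> WC g a b z.
Proof. intros He Hz H eps Heps. destruct (H eps Heps) as [d [Hd H']].
  exists d; split; auto. intros x Hx Hxz. rewrite <- !He; auto. Qed.

Lemma WC_comp_cont (f k : R -> R) a b z : WC f a b z -> continuous k (f z) ->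
  WC (fun x => k (f x)) a b z.
Proof. intros H Hk. rewrite cont_eps in Hk. intros eps He.
  destruct (Hk eps He) as [d1 [Hd1 Hk']]. destruct (H d1 Hd1) as [d [Hd H']].
  exists d; split; auto. Qed.

Lemma WC_comp (f k : R -> R) a b c d z : WC f a b z ->
  (forall x, a <= x <= b -> c <= f x <= d) -> a <= z <= b -> WC k c d (f z) ->
  WC (fun x => k (f x)) a b z.
Proof. intros H Hr Hz Hk eps He.
  destruct (Hk eps He) as [d1 [Hd1 Hk']]. destruct (H d1 Hd1) as [d0 [Hd H']].
  exists d0; split; auto. Qed.

Lemma Lip_WC f a b K : 0 <= K -> (forall x y, a <= x <= b -> a <= y <= b -> Rabs (f x - f y) <= K * Rabs (x - y)) ->
  WCon f a b.
Proof. intros HK H z Hz eps He. exists (eps / (K + 1)). split.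
  { apply Rdiv_lt_0_compat; lra. }
  intros x Hx Hxz. eapply Rle_lt_trans. apply H; auto.
  apply Rle_lt_trans with ((K+1) * Rabs (x - z)).
  { apply Rmult_le_compat_r; [apply Rabs_pos | lra]. }
  apply Rmult_lt_reg_l with (/ (K+1)). { apply Rinv_0_lt_compat; lra. }
  rewrite <- Rmult_assoc, Rinv_l by lra. unfold Rdiv in Hxz. lra.
Qed.

Definition clamp a b x := Rmax a (Rmin b x).

Lemma clamp_in a b x : a <= b -> a <= clamp a b x <= b.
Proof. intros H; unfold clamp. split. apply Rmax_l.
  apply Rmax_lub; auto. apply Rmin_l. Qed.

Lemma clamp_id a b x : a <= x <= b -> clamp a b x = x.
Proof. intros H; unfold clamp. rewrite Rmin_right by lra. rewrite Rmax_right; lra. Qed.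

Lemma clamp_lip a b x z : a <= b -> a <= z <= b -> Rabs (clamp a b x - z) <= Rabs (x - z).
Proof. intros H Hz. unfold clamp.
  destruct (Rle_dec x b); [rewrite Rmin_right by lra | rewrite Rmin_left by lra];
  (destruct (Rle_dec a x); [rewrite Rmax_right by lra | rewrite Rmax_left by lra]);
  try lra; unfold Rabs; repeat destruct Rcase_abs; lra.
Qed.

Lemma WC_clamp_cont f a b z : a <= b -> a <= z <= b -> WC f a b z ->
  continuous (fun x => f (clamp a b x)) z.
Proof. intros Hab Hz H. apply cont_eps. intros eps He.
  destruct (H eps He) as [d [Hd H']]. exists d; split; auto.
  intros x Hx. rewrite (clamp_id a b z Hz). apply H'. apply clamp_in; auto.
  eapply Rle_lt_trans. apply clamp_lip; auto. auto. Qed.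

Lemma WC_ex_RInt f a b : a <= b -> WCon f a b -> ex_RInt f a b.
Proof. intros Hab H.
  apply ex_RInt_ext with (fun x => f (clamp a b x)).
  { intros x Hx. rewrite Rmin_left in Hx by lra. rewrite Rmax_right in Hx by lra.
    rewrite clamp_id; auto; lra. }
  apply (@ex_RInt_continuous R_CompleteNormedModule). intros z Hz.
  rewrite Rmin_left in Hz by lra. rewrite Rmax_right in Hz by lra.
  apply WC_clamp_cont; auto. Qed.

Lemma RInt_lb f a b c : a <= b -> ex_RInt f a b -> (forall x, a < x < b -> c <= f x) ->
  c * (b - a) <= RInt f a b.
Proof. intros Hab Hi H.
  replace (c * (b - a)) with (RInt (fun _ => c) a b).
  apply RInt_le; auto. apply ex_RInt_const.
  rewrite RInt_const. unfold scal; simpl; unfold mult; simpl. ring. Qed.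

Lemma RInt_ub f a b c : a <= b -> ex_RInt f a b -> (forall x, a < x < b -> f x <= c) ->
  RInt f a b <= c * (b - a).
Proof. intros Hab Hi H.
  replace (c * (b - a)) with (RInt (fun _ => c) a b).
  apply RInt_le; auto. apply ex_RInt_const.
  rewrite RInt_const. unfold scal; simpl; unfold mult; simpl. ring. Qed.

Lemma RInt_Chasles_R f a b c : ex_RInt f a b -> ex_RInt f b c ->
  RInt f a c = RInt f a b + RInt f b c.
Proof. intros H1 H2. rewrite <- (RInt_Chasles f a b c H1 H2). reflexivity. Qed.

Lemma RInt_swap_R f a b : ex_RInt f a b -> RInt f b a = - RInt f a b.
Proof. intros H. rewrite <- (opp_RInt_swap f a b H). reflexivity. Qed.

Lemma RInt_abs_bound f a b K : ex_RInt f a b -> (forall x, Rmin a b < x < Rmax a b -> Rabs (f x) <= K) ->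
  Rabs (RInt f a b) <= K * Rabs (b - a).
Proof. intros Hi H. destruct (Rle_dec a b).
  - rewrite Rmin_left, Rmax_right in H by lra. rewrite (Rabs_right (b - a)) by lra.
    apply Rabs_le. split.
    + replace (- (K * (b - a))) with ((-K) * (b-a)) by ring. apply RInt_lb; auto.
      intros x Hx; specialize (H x Hx); apply Rabs_le_between in H; lra.
    + apply RInt_ub; auto. intros x Hx; specialize (H x Hx); apply Rabs_le_between in H; lra.
  - rewrite Rmin_right, Rmax_left in H by lra. rewrite (Rabs_left (b - a)) by lra.
    apply ex_RInt_swap in Hi. rewrite <- (opp_RInt_swap f b a Hi). 
    change (opp (RInt f b a)) with (- RInt f b a). rewrite Rabs_Ropp.
    apply Rabs_le. split.
    + replace (- (K * - (b - a))) with ((-K) * (a-b)) by ring. apply RInt_lb; auto; try lra.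
      intros x Hx; specialize (H x Hx); apply Rabs_le_between in H; lra.
    + replace (K * - (b - a)) with (K * (a - b)) by ring.
      apply RInt_ub; auto; try lra. intros x Hx; specialize (H x Hx); apply Rabs_le_between in H; lra.
Qed.

Lemma RInt_correct_R (f : R -> R) a b : ex_RInt f a b -> is_RInt f a b (RInt f a b).
Proof. apply (@RInt_correct R_CompleteNormedModule). Qed.

Lemma exp_le' x y : x <= y -> exp x <= exp y.
Proof. intros [H|H]. left; apply exp_increasing; auto. subst; lra. Qed.

Lemma ln_le' x y : 0 < x -> x <= y -> ln x <= ln y.
Proof. intros Hx [H|H]. left; apply ln_increasing; auto. subst; lra. Qed.

Lemma Rabs_lt_iff x y e : Rabs (x - y) < e -> y - e < x < y + e.
Proof. intros H. apply Rabs_def2 in H. lra. Qed.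

Lemma ex_derive_cont_R (f : R -> R) x : ex_derive f x -> continuous f x.
Proof. apply (@ex_derive_continuous R_AbsRing R_NormedModule). Qed.

Lemma WC_extend f a b b' z : z < b' -> b' <= b -> WC f a b' z -> WC f a b z.
Proof. intros Hz Hb H eps He. destruct (H eps He) as [d [Hd H']].
  exists (Rmin d (b' - z)). split. apply Rmin_pos; lra.
  intros x Hx Hxz. pose proof (Rmin_l d (b' - z)). pose proof (Rmin_r d (b' - z)).
  apply Rabs_lt_iff in Hxz as Hxz'. apply H'. lra. lra. Qed.

Lemma Rmin_lip b x y : Rabs (Rmin b x - Rmin b y) <= Rabs (x - y).
Proof. unfold Rmin. destruct (Rle_dec b x); destruct (Rle_dec b y); unfold Rabs;
  repeat destruct Rcase_abs; lra. Qed.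

Lemma Rmax_lip b x y : Rabs (Rmax b x - Rmax b y) <= Rabs (x - y).
Proof. unfold Rmax. destruct (Rle_dec b x); destruct (Rle_dec b y); unfold Rabs;
  repeat destruct Rcase_abs; lra. Qed.

Lemma clamp_lip2 a b x y : Rabs (clamp a b x - clamp a b y) <= Rabs (x - y).
Proof. unfold clamp. eapply Rle_trans. apply Rmax_lip. apply Rmin_lip. Qed.

Lemma inv_close q e eps : 0 < e -> 0 < eps -> Rabs (q - e) < Rmin (e/2) (eps*e*e/2) -> Rabs (/q - /e) < eps.
Proof. intros He Heps Hq. pose proof (Rmin_l (e/2) (eps*e*e/2)). pose proof (Rmin_r (e/2) (eps*e*e/2)).
  apply Rabs_lt_iff in Hq. assert (Hq0 : e / 2 < q) by lra.
  replace (/q - /e) with ((e - q) * /(q*e)) by (field; lra).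
  assert (Hw : 0 < /(q*e)) by (apply Rinv_0_lt_compat; nra).
  assert (Hw1 : /(q*e) * (q*e) = 1) by (field; lra).
  rewrite Rabs_mult, (Rabs_right (/(q*e))) by lra.
  apply Rmult_lt_reg_r with (q*e). nra. rewrite Rmult_assoc, Hw1, Rmult_1_r.
  apply Rabs_def1; nra.
Qed.

Section Main.
Variables (sigma : R) (h : R -> R) (gamma C : R).
Hypothesis Hsigma : 0 < sigma.
Hypothesis Hpos : forall s, 0 <= s < sigma -> 0 <= h s.
Hypothesis Hcont0 : filterlim h (at_right 0) (locally (h 0)).
Hypothesis Hcont : forall s, 0 < s < sigma -> continuous h s.
Hypothesis Hincr : forall s t, 0 <= s -> s < t -> t < sigma -> h s < h t.

Lemma h_pos s : 0 < s < sigma -> 0 < h s.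
Proof. intros Hs. apply Rle_lt_trans with (h 0). apply Hpos; lra. apply Hincr; lra. Qed.

Lemma h_le s t : 0 <= s -> s <= t -> t < sigma -> h s <= h t.
Proof. intros. destruct (Req_dec s t). subst; lra. left; apply Hincr; lra. Qed.

Lemma h_WC s : 0 <= s < sigma -> WCon h 0 s.
Proof. intros Hs z Hz. destruct (Req_dec z 0) as [->|Hz0].
  - intros eps He. pose proof Hcont0 as Hc. unfold filterlim, filter_le, filtermap in Hc.
    apply filterlim_locally with (eps := mkposreal eps He) in Hcont0.
    destruct Hcont0 as [d Hd]. exists d; split; [apply cond_pos|].
    intros x Hx Hxz. destruct (Req_dec x 0) as [->|Hx0].
    + rewrite Rminus_diag, Rabs_R0; lra.
    + apply (ball_R (h 0) eps (h x)). apply Hd. apply ball_R. exact Hxz. lra.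
  - apply cont_WC. apply Hcont. lra.
Qed.

Lemma WCon_sub f a b a' b' : a <= a' -> b' <= b -> WCon f a b -> WCon f a' b'.
Proof. intros H1 H2 H z Hz. apply WC_sub with a b; auto. apply H; lra. Qed.

Lemma h_int a b : 0 <= a <= b -> b < sigma -> ex_RInt h a b.
Proof. intros Hab Hb. apply WC_ex_RInt; [lra|]. apply WCon_sub with 0 b; try lra.
  apply h_WC; lra. Qed.

Notation HH := (Hf h).

Lemma H_0 : HH 0 = 0.
Proof. unfold Hf. rewrite RInt_point. reflexivity. Qed.

Lemma H_diff a b : 0 <= a <= b -> b < sigma -> HH b - HH a = RInt h a b.
Proof. intros. unfold Hf. rewrite (RInt_Chasles_R h 0 a b). ring.
  apply h_int; lra. apply h_int; lra. Qed.

Lemma H_le a b : 0 <= a <= b -> b < sigma -> HH a <= HH b.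
Proof. intros. assert (0 <= RInt h a b). apply RInt_ge_0. lra. apply h_int; lra.
  intros; apply Hpos; lra. pose proof (H_diff a b). lra. Qed.

Lemma H_nonneg a : 0 <= a < sigma -> 0 <= HH a.
Proof. intros. rewrite <- H_0. apply H_le; lra. Qed.

Lemma H_lt a b : 0 <= a < b -> b < sigma -> HH a < HH b.
Proof. intros. rewrite <- (Rplus_0_r (HH a)). 
  assert (0 < RInt h a b).
  { set (m := (a + b) / 2). rewrite (RInt_Chasles_R h a m b).
    assert (0 <= RInt h a m). apply RInt_ge_0. unfold m; lra. apply h_int; unfold m; lra.
      intros; apply Hpos; unfold m in *; lra.
    assert (h m * (b - m) <= RInt h m b). apply RInt_lb. unfold m; lra. apply h_int; unfold m; lra.
      intros; apply h_le; unfold m in *; lra.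
    assert (0 < h m * (b - m)). apply Rmult_lt_0_compat. apply h_pos; unfold m; lra. unfold m; lra.
    lra. apply h_int; unfold m; lra. apply h_int; unfold m; lra. }
  pose proof (H_diff a b). lra. Qed.

Lemma H_WC s : 0 <= s < sigma -> WCon HH 0 s.
Proof. intros Hs. apply Lip_WC with (h s). apply Hpos; lra.
  intros x y Hx Hy. destruct (Rle_dec x y).
  - rewrite <- Rabs_Ropp, Ropp_minus_distr, H_diff by lra. rewrite <- (Rabs_Ropp (x - y)), Ropp_minus_distr.
    apply RInt_abs_bound. apply h_int; lra. intros z Hz. rewrite Rmin_left, Rmax_right in Hz by lra.
    rewrite Rabs_right. apply h_le; lra. apply Rle_ge, Hpos; lra.
  - rewrite H_diff by lra. apply RInt_abs_bound. apply h_int; lra. intros z Hz. rewrite Rmin_left, Rmax_right in Hz by lra.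
    rewrite Rabs_right. apply h_le; lra. apply Rle_ge, Hpos; lra.
Qed.

Lemma H_deriv s : 0 < s < sigma -> is_derive HH s (h s).
Proof. intros Hs. apply is_derive_RInt with 0.
  - assert (Hp : 0 < Rmin s (sigma - s)) by (apply Rmin_pos; lra).
    exists (mkposreal _ Hp).
    intros y Hy. assert (Hy2 : Rabs (y - s) < Rmin s (sigma - s)) by (apply ball_R in Hy; exact Hy).
    pose proof (Rmin_l s (sigma - s)). pose proof (Rmin_r s (sigma - s)).
    apply Rabs_def2 in Hy2. apply RInt_correct_R. apply h_int; lra.
  - apply Hcont; lra.
Qed.


Hypothesis Hblow : filterlim h (at_left sigma) (Rbar_locally p_infty).
Hypothesis Hgamma : 1 <= gamma < 2.
Hypothesis HC : 0 < C.
Hypothesis Hasym : filterlim (fun s => Rpower (sigma - s) gamma * h s)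
                     (at_left sigma) (locally C).

Lemma asym_bounds : exists t1, 0 < t1 < sigma /\ sigma - t1 <= 1 /\ forall s, t1 <= s < sigma -> C/2 <= Rpower (sigma - s) gamma * h s <= 2*C.
Proof.
  assert (He : 0 < C/2) by lra.
  pose proof (proj1 (filterlim_locally _ _) Hasym (mkposreal _ He)) as Ha.
  destruct Ha as [d Hd]. simpl in Hd.
  exists (Rmax (sigma - d/2) (Rmax (sigma - 1) (sigma/2))).
  pose proof (cond_pos d). pose proof (Rmax_l (sigma - d/2) (Rmax (sigma - 1) (sigma/2))).
  pose proof (Rmax_r (sigma - d/2) (Rmax (sigma - 1) (sigma/2))).
  pose proof (Rmax_l (sigma - 1) (sigma/2)). pose proof (Rmax_r (sigma - 1) (sigma/2)).
  split; [split|split].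
  - lra.
  - apply Rmax_lub_lt. lra. apply Rmax_lub_lt; lra.
  - lra.
  - intros s Hs. assert (Hb : ball sigma d s) by (apply ball_R; rewrite Rabs_left by lra; lra).
    specialize (Hd s Hb (proj2 Hs)). apply ball_R in Hd. apply Rabs_lt_iff in Hd. lra.
Qed.

Lemma pw_pos u : 0 < Rpower u gamma.
Proof. unfold Rpower. apply exp_pos. Qed.

Lemma pw_le_u u : 0 < u <= 1 -> Rpower u gamma <= u.
Proof. intros Hu. unfold Rpower. rewrite <- (exp_ln u) at 2 by lra. apply exp_le'.
  assert (ln u <= 0) by (rewrite <- ln_1; apply ln_le'; lra). nra. Qed.

Lemma pw_half u : 0 < u -> Rpower u gamma <= 4 * Rpower (u/2) gamma.
Proof. intros Hu. replace u with ((u/2) * 2) at 1 by field.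
  rewrite <- Rpower_mult_distr by lra. rewrite Rmult_comm. apply Rmult_le_compat_r.
  left; apply pw_pos.
  replace 4 with (Rpower 2 2). apply Rle_Rpower; lra.
  replace 2 with (INR 2) at 2 by (simpl; ring). rewrite Rpower_pow by lra. simpl; ring.
Qed.

Lemma pw_le u v : 0 < u <= v -> Rpower u gamma <= Rpower v gamma.
Proof. intros. apply Rle_Rpower_l; lra. Qed.

Lemma h_lower : exists t1, 0 < t1 < sigma /\ sigma - t1 <= 1 /\ forall s, t1 <= s < sigma -> C / (2 * (sigma - s)) <= h s /\ h s <= 2 * C / Rpower (sigma - s) gamma.
Proof. destruct asym_bounds as [t1 [Ht1 [Ht1' Hb]]]. exists t1. split; auto. split; auto.
  intros s Hs. specialize (Hb s Hs). pose proof (pw_pos (sigma - s)).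
  pose proof (pw_le_u (sigma - s) ltac:(lra)). split.
  - apply Rle_trans with (C / (2 * Rpower (sigma - s) gamma)).
    + unfold Rdiv. apply Rmult_le_compat_l. lra. apply Rinv_le_contravar. nra. nra.
    + apply Rmult_le_reg_l with (2 * Rpower (sigma - s) gamma). nra.
      field_simplify; lra.
  - apply Rmult_le_reg_l with (Rpower (sigma - s) gamma). auto. field_simplify; lra.
Qed.

Lemma H_infty : forall M, exists d, 0 < d /\ forall s, sigma - d < s < sigma -> M < HH s.
Proof.
  intros M. destruct h_lower as [t1 [Ht1 [Ht1' Hb]]].
  set (Lam := ln (sigma - t1) - (2 / C) * (M - HH t1)).
  exists (Rmin (exp Lam) (sigma - t1)). split. apply Rmin_pos. apply exp_pos. lra.
  intros s Hs. pose proof (Rmin_l (exp Lam) (sigma - t1)). pose proof (Rmin_r (exp Lam) (sigma - t1)).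
  assert (Hint : is_RInt (fun t => C / (2 * (sigma - t))) t1 s
     (minus ((fun t => -(C/2) * ln (sigma - t)) s) ((fun t => -(C/2) * ln (sigma - t)) t1))).
  { apply (@is_RInt_derive R_CompleteNormedModule (fun t => -(C/2) * ln (sigma - t))).
    - intros x Hx. rewrite Rmin_left, Rmax_right in Hx by lra. auto_derive. lra. field. lra.
    - intros x Hx. rewrite Rmin_left, Rmax_right in Hx by lra. apply (ex_derive_cont_R (fun t => C / (2 * (sigma - t)))).
      auto_derive. lra. }
  assert (Hle : RInt (fun t => C / (2 * (sigma - t))) t1 s <= RInt h t1 s).
  { apply RInt_le. lra. eexists; exact Hint. apply h_int; lra.
    intros x Hx. apply Hb; lra. }
  rewrite (is_RInt_unique _ _ _ _ Hint) in Hle. unfold minus, plus, opp in Hle; simpl in Hle.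
  rewrite <- H_diff in Hle by lra.
  assert (ln (sigma - s) < Lam).
  { rewrite <- (ln_exp Lam). apply ln_increasing; lra. }
  unfold Lam in H1.
  assert (Hk : (C/2) * (ln (sigma - t1) - ln (sigma - s)) > M - HH t1).
  { apply Rmult_lt_reg_l with (2 / C). apply Rdiv_lt_0_compat; lra.
    replace (2 / C * (C / 2 * (ln (sigma - t1) - ln (sigma - s)))) with (ln (sigma - t1) - ln (sigma - s)) by (field; lra).
    lra. }
  assert (C / 2 * (ln (sigma - t1) - ln (sigma - s)) <= HH s - HH t1) by (eapply Rle_trans; [|exact Hle]; right; ring). clear -Hk H2. lra.
Qed.


Notation EE := (Ef h sigma).

Lemma E_lt t : t < sigma -> EE t = exp (- HH t).
Proof. intros. unfold Ef. destruct (Rlt_dec t sigma); [reflexivity|lra]. Qed.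

Lemma E_ge t : sigma <= t -> EE t = 0.
Proof. intros. unfold Ef. destruct (Rlt_dec t sigma); [lra|reflexivity]. Qed.

Lemma E_pos t : t < sigma -> 0 < EE t.
Proof. intros. rewrite E_lt by lra. apply exp_pos. Qed.

Lemma E_nonneg t : 0 <= EE t.
Proof. unfold Ef. destruct (Rlt_dec t sigma). left; apply exp_pos. lra. Qed.

Lemma E_le1 t : 0 <= t -> EE t <= 1.
Proof. intros. unfold Ef. destruct (Rlt_dec t sigma). rewrite <- exp_0. apply exp_le'.
  pose proof (H_nonneg t). lra. lra. Qed.

Lemma E_decr x y : 0 <= x <= y -> EE y <= EE x.
Proof. intros. destruct (Rlt_dec y sigma).
  - rewrite !E_lt by lra. apply exp_le'. pose proof (H_le x y). lra.
  - rewrite (E_ge y) by lra. apply E_nonneg. Qed.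

Lemma E_sdecr x y : 0 <= x < y -> y <= sigma -> EE y < EE x.
Proof. intros. destruct (Rlt_dec y sigma).
  - rewrite !E_lt by lra. apply exp_increasing. pose proof (H_lt x y). lra.
  - rewrite (E_ge y) by lra. apply E_pos. lra. Qed.

Lemma E_WC : WCon EE 0 sigma.
Proof. intros z Hz. destruct (Rlt_dec z sigma).
  - set (s' := (z + sigma) / 2). apply WC_extend with s'. unfold s'; lra. unfold s'; lra.
    apply WC_ext with (fun x => exp (- HH x)). intros x Hx. rewrite E_lt; auto. unfold s' in Hx; lra.
    unfold s'; lra.
    apply (WC_comp_cont HH (fun v => exp (- v))). apply H_WC. unfold s'; lra. unfold s'; lra.
    apply ex_derive_cont_R. auto_derive. auto.
  - assert (z = sigma) by lra. subst z. intros eps He.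
    destruct (H_infty (- ln eps)) as [d [Hd Hd']]. exists d. split; auto.
    intros x Hx Hxz. rewrite (E_ge sigma) by lra. rewrite Rminus_0_r.
    rewrite Rabs_right by (apply Rle_ge, E_nonneg).
    destruct (Req_dec x sigma). subst. rewrite E_ge by lra. auto.
    rewrite E_lt by lra. rewrite <- (exp_ln eps) by auto. apply exp_increasing.
    apply Rabs_lt_iff in Hxz. specialize (Hd' x ltac:(lra)). lra.
Qed.

Lemma E_cont_int t : 0 < t < sigma -> continuous EE t.
Proof. intros. apply WC_cont_int with 0 sigma; auto. apply E_WC; lra. Qed.

Lemma E_deriv t : 0 < t < sigma -> is_derive EE t (- h t * EE t).
Proof. intros Ht. apply is_derive_ext_loc with (fun x => exp (- HH x)).
  - assert (Hp : 0 < sigma - t) by lra. exists (mkposreal _ Hp). intros y Hy.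
    apply ball_R in Hy. apply Rabs_lt_iff in Hy. simpl in Hy. rewrite E_lt; auto. lra.
  - rewrite E_lt by lra.
    replace (- h t * exp (- HH t)) with (scal (h t) (- exp (- HH t))).
    apply (is_derive_comp (fun v => exp (- v)) HH t).
    + auto_derive. auto. ring.
    + apply H_deriv; auto.
    + unfold scal; simpl; unfold mult; simpl. ring.
Qed.


Notation PP := (psi h sigma).
Notation LL := (Lval h sigma).

Lemma E_int a b : 0 <= a <= b -> b <= sigma -> ex_RInt EE a b.
Proof. intros. apply WC_ex_RInt. lra. apply WCon_sub with 0 sigma; try lra. apply E_WC. Qed.

Lemma P_0 : PP 0 = 0.
Proof. unfold psi. rewrite RInt_point. reflexivity. Qed.

Lemma P_diff x y : 0 <= x <= y -> y <= sigma -> PP y - PP x = RInt EE x y.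
Proof. intros. unfold psi. rewrite (RInt_Chasles_R EE 0 x y). ring.
  apply E_int; lra. apply E_int; lra. Qed.

Lemma P_le x y : 0 <= x <= y -> y <= sigma -> PP x <= PP y.
Proof. intros. assert (0 <= RInt EE x y). apply RInt_ge_0. lra. apply E_int; lra.
  intros; apply E_nonneg. pose proof (P_diff x y). lra. Qed.

Lemma P_lb x y : 0 <= x <= y -> y <= sigma -> EE y * (y - x) <= PP y - PP x.
Proof. intros. rewrite P_diff by lra. apply RInt_lb. lra. apply E_int; lra.
  intros; apply E_decr; lra. Qed.

Lemma P_lt x y : 0 <= x < y -> y <= sigma -> PP x < PP y.
Proof. intros. set (m := (x + y) / 2).
  pose proof (P_lb x m ltac:(unfold m; lra) ltac:(unfold m; lra)).
  pose proof (P_le m y ltac:(unfold m; lra) ltac:(unfold m; lra)).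
  assert (0 < EE m * (m - x)). apply Rmult_lt_0_compat. apply E_pos. unfold m; lra. unfold m; lra.
  lra. Qed.

Lemma P_lip x y : 0 <= x <= sigma -> 0 <= y <= sigma -> Rabs (PP x - PP y) <= 1 * Rabs (x - y).
Proof. intros. destruct (Rle_dec x y).
  - rewrite <- Rabs_Ropp, Ropp_minus_distr, P_diff by lra. rewrite <- (Rabs_Ropp (x - y)), Ropp_minus_distr.
    apply RInt_abs_bound. apply E_int; lra. intros z Hz. rewrite Rabs_right. apply E_le1.
    rewrite Rmin_left in Hz; lra. apply Rle_ge, E_nonneg.
  - rewrite P_diff by lra. apply RInt_abs_bound. apply E_int; lra. intros z Hz. rewrite Rabs_right. apply E_le1.
    rewrite Rmin_left in Hz; lra. apply Rle_ge, E_nonneg.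
Qed.

Lemma P_deriv t : 0 < t < sigma -> is_derive PP t (EE t).
Proof. intros Ht. apply is_derive_RInt with 0.
  - assert (Hp : 0 < Rmin t (sigma - t)) by (apply Rmin_pos; lra).
    exists (mkposreal _ Hp).
    intros y Hy. assert (Hy2 : Rabs (y - t) < Rmin t (sigma - t)) by (apply ball_R in Hy; exact Hy).
    pose proof (Rmin_l t (sigma - t)). pose proof (Rmin_r t (sigma - t)).
    apply Rabs_def2 in Hy2. apply RInt_correct_R. apply E_int; lra.
  - apply E_cont_int; lra.
Qed.

Lemma L_pos : 0 < LL.
Proof. unfold Lval. rewrite <- P_0. apply P_lt; lra. Qed.

Notation PI := (psi_inv h sigma).

Lemma Pinv_spec y : 0 <= y <= LL -> 0 <= PI y <= sigma /\ PP (PI y) = y.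
Proof. intros Hy. unfold psi_inv. apply epsilon_spec.
  assert (Hc : continuity (fun x => PP (clamp 0 sigma x))).
  { intros x. apply continuity_pt_filterlim. apply (proj2 (cont_eps (fun x => PP (clamp 0 sigma x)) x)). intros eps He. exists eps. split; auto. intros z Hz.
    eapply Rle_lt_trans. apply P_lip. apply clamp_in; lra. apply clamp_in; lra.
    rewrite Rmult_1_l. eapply Rle_lt_trans. apply clamp_lip2. auto. }
  destruct (IVT_gen _ 0 sigma y Hc) as [x [Hx Hxy]].
  - rewrite (clamp_id 0 sigma 0) by lra. rewrite (clamp_id 0 sigma sigma) by lra. rewrite P_0.
    unfold Lval in Hy. rewrite Rmin_left, Rmax_right; lra.
  - rewrite Rmin_left, Rmax_right in Hx by lra. rewrite clamp_id in Hxy by lra. exists x; auto.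
Qed.

Lemma Pinv_P t : 0 <= t <= sigma -> PI (PP t) = t.
Proof. intros Ht. assert (0 <= PP t <= LL).
  { rewrite <- P_0. unfold Lval. split; apply P_le; lra. }
  destruct (Pinv_spec (PP t) H) as [H1 H2].
  destruct (Rtotal_order (PI (PP t)) t) as [Hl|[He|Hg]]; auto.
  - pose proof (P_lt (PI (PP t)) t ltac:(lra) ltac:(lra)). lra.
  - pose proof (P_lt t (PI (PP t)) ltac:(lra) ltac:(lra)). lra.
Qed.

Lemma Pinv_0 : PI 0 = 0.
Proof. rewrite <- P_0 at 1. apply Pinv_P. lra. Qed.

Lemma Pinv_L : PI LL = sigma.
Proof. unfold Lval. apply Pinv_P. lra. Qed.

Lemma Pinv_lt_of x b : 0 <= x <= LL -> 0 <= b <= sigma -> x < PP b -> PI x < b.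
Proof. intros Hx Hb Hlt. destruct (Pinv_spec x Hx) as [H1 H2].
  destruct (Rlt_le_dec (PI x) b); auto. pose proof (P_le b (PI x) ltac:(lra) ltac:(lra)). lra. Qed.

Lemma Pinv_gt_of x a : 0 <= x <= LL -> 0 <= a <= sigma -> PP a < x -> a < PI x.
Proof. intros Hx Ha Hlt. destruct (Pinv_spec x Hx) as [H1 H2].
  destruct (Rlt_le_dec a (PI x)); auto. pose proof (P_le (PI x) a ltac:(lra) ltac:(lra)). lra. Qed.

Lemma Pinv_mono x y : 0 <= x < y -> y <= LL -> PI x < PI y.
Proof. intros. destruct (Pinv_spec x ltac:(lra)) as [H1 H2]. apply Pinv_gt_of; try lra. Qed.

Lemma Pinv_le x y : 0 <= x <= y -> y <= LL -> PI x <= PI y.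
Proof. intros. destruct (Req_dec x y). subst; lra. left; apply Pinv_mono; lra. Qed.

Lemma Pinv_ltsig y : 0 <= y < LL -> PI y < sigma.
Proof. intros. apply Pinv_lt_of; unfold Lval in *; try lra. Qed.

Lemma Pinv_pos y : 0 < y <= LL -> 0 < PI y.
Proof. intros. apply Pinv_gt_of; try lra. rewrite P_0; lra. Qed.

Lemma Pinv_WC : WCon PI 0 LL.
Proof. intros y Hy eps He. destruct (Pinv_spec y Hy) as [Ht Hpy]. set (t := PI y) in *.
  assert (HR : exists dR, 0 < dR /\ forall x, 0 <= x <= LL -> x - y < dR -> PI x < t + eps).
  { destruct (Rlt_dec t sigma).
    - assert (Hb1 : Rmin sigma (t + eps/2) <= sigma) by apply Rmin_l. assert (Hb2 : Rmin sigma (t + eps/2) <= t + eps/2) by apply Rmin_r. assert (t < Rmin sigma (t + eps/2)) by (apply Rmin_glb_lt; lra). set (b := Rmin sigma (t + eps/2)) in *. clearbody b.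
      exists (PP b - y). split. rewrite <- Hpy. assert (PP t < PP b) by (apply P_lt; lra). lra.
      intros x Hx Hxy. assert (PI x < b). apply Pinv_lt_of; auto. lra. lra. lra.
    - exists 1. split. lra. intros x Hx _. destruct (Pinv_spec x Hx). lra. }
  assert (HL : exists dL, 0 < dL /\ forall x, 0 <= x <= LL -> y - x < dL -> t - eps < PI x).
  { destruct (Rlt_dec 0 t).
    - assert (Ha1 : 0 <= Rmax 0 (t - eps/2)) by apply Rmax_l. assert (Ha2 : t - eps/2 <= Rmax 0 (t - eps/2)) by apply Rmax_r. assert (Rmax 0 (t - eps/2) < t) by (apply Rmax_lub_lt; lra). set (a := Rmax 0 (t - eps/2)) in *. clearbody a.
      exists (y - PP a). split. rewrite <- Hpy. assert (PP a < PP t) by (apply P_lt; lra). lra.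
      intros x Hx Hxy. assert (a < PI x). apply Pinv_gt_of; auto. lra. lra. lra.
    - exists 1. split. lra. intros x Hx _. destruct (Pinv_spec x Hx). lra. }
  destruct HR as [dR [HdR HR]]. destruct HL as [dL [HdL HL]].
  exists (Rmin dR dL). split. apply Rmin_pos; auto.
  intros x Hx Hxy. pose proof (Rmin_l dR dL). pose proof (Rmin_r dR dL). apply Rabs_lt_iff in Hxy.
  specialize (HR x Hx ltac:(lra)). specialize (HL x Hx ltac:(lra)). apply Rabs_def1; lra.
Qed.


Notation GG := (gf h sigma).

Lemma g_eq y : GG y = EE (PI y).
Proof. reflexivity. Qed.

Lemma g_0 : GG 0 = 1.
Proof. rewrite g_eq, Pinv_0, E_lt by lra. rewrite H_0, Ropp_0, exp_0. reflexivity. Qed.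

Lemma g_L : GG LL = 0.
Proof. rewrite g_eq, Pinv_L, E_ge by lra. reflexivity. Qed.

Lemma g_sdecr x y : 0 <= x < y -> y <= LL -> GG y < GG x.
Proof. intros. rewrite !g_eq. destruct (Pinv_spec x ltac:(lra)). destruct (Pinv_spec y ltac:(lra)).
  pose proof (Pinv_mono x y ltac:(lra) ltac:(lra)). apply E_sdecr; lra. Qed.

Lemma g_decr x y : 0 <= x <= y -> y <= LL -> GG y <= GG x.
Proof. intros. destruct (Req_dec x y). subst; lra. left; apply g_sdecr; lra. Qed.

Lemma g_nonneg y : 0 <= GG y.
Proof. apply E_nonneg. Qed.

Lemma g_le1 y : 0 <= y <= LL -> GG y <= 1.
Proof. intros. rewrite <- g_0. apply g_decr; lra. Qed.

Lemma g_pos y : 0 <= y < LL -> 0 < GG y.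
Proof. intros. rewrite <- g_L. apply g_sdecr; lra. Qed.

Lemma g_WC : WCon GG 0 LL.
Proof. intros z Hz. apply (WC_comp PI EE 0 LL 0 sigma z). apply Pinv_WC; auto.
  intros x Hx. apply Pinv_spec; auto. auto. apply E_WC. apply Pinv_spec; auto. Qed.

Lemma g_int a b : 0 <= a <= b -> b <= LL -> ex_RInt GG a b.
Proof. intros. apply WC_ex_RInt. lra. apply WCon_sub with 0 LL; try lra. apply g_WC. Qed.

Lemma Pinv_deriv y : 0 < y < LL -> is_derive PI y (/ EE (PI y)).
Proof. intros Hy. apply is_derive_Reals. intros eps Heps.
  destruct (Pinv_spec y ltac:(lra)) as [Ht Hpy].
  assert (Ht' : 0 < PI y < sigma). split. apply Pinv_pos; lra. apply Pinv_ltsig; lra.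
  set (t := PI y) in *. set (e := EE t).
  assert (He : 0 < e) by (apply E_pos; lra).
  pose proof (proj1 (is_derive_Reals _ _ _) (P_deriv t Ht')) as HD.
  assert (Hm : 0 < Rmin (e/2) (eps*e*e/2)) by (apply Rmin_pos; [lra | unfold Rdiv; apply Rmult_lt_0_compat; [ repeat apply Rmult_lt_0_compat; lra | lra ]]).
  destruct (HD _ Hm) as [d1 Hd1].
  destruct (Pinv_WC y ltac:(lra) d1 (cond_pos d1)) as [d2 [Hd2 Hd2']].
  assert (Hd : 0 < Rmin d2 (Rmin y (LL - y))) by (repeat apply Rmin_pos; lra).
  exists (mkposreal _ Hd). intros k Hk0 Hk. simpl in Hk.
  pose proof (Rmin_l d2 (Rmin y (LL - y))). pose proof (Rmin_r d2 (Rmin y (LL - y))).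
  pose proof (Rmin_l y (LL - y)). pose proof (Rmin_r y (LL - y)).
  assert (Hk' : - Rmin d2 (Rmin y (LL - y)) < k < Rmin d2 (Rmin y (LL - y))) by (apply Rabs_def2 in Hk; lra).
  destruct (Pinv_spec (y + k) ltac:(lra)) as [Hx1 Hx2].
  set (j := PI (y + k) - t).
  assert (Hj : j <> 0).
  { unfold j. intros Hj. destruct (Rlt_dec k 0).
    - pose proof (Pinv_mono (y + k) y ltac:(lra) ltac:(lra)). fold t in H3. lra.
    - pose proof (Pinv_mono y (y + k) ltac:(lra) ltac:(lra)). fold t in H3. lra. }
  assert (Hjd : Rabs j < d1).
  { unfold j. apply Hd2'. lra. replace (y + k - y) with k by ring. lra. }
  specialize (Hd1 j Hj Hjd).
  replace (t + j) with (PI (y + k)) in Hd1 by (unfold j; ring).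
  rewrite Hx2, Hpy in Hd1. fold e in Hd1.
  replace (y + k - y) with k in Hd1 by ring.
  match goal with |- Rabs (?A - _) < _ => replace A with (/ (k / j)) end.
  apply inv_close; auto.
  unfold j, t. field. split; auto.
Qed.

Lemma g_deriv y : 0 < y < LL -> is_derive GG y (- h (PI y)).
Proof. intros Hy.
  assert (Ht' : 0 < PI y < sigma). split. apply Pinv_pos; lra. apply Pinv_ltsig; lra.
  assert (He : 0 < EE (PI y)) by (apply E_pos; lra).
  replace (- h (PI y)) with (scal (/ EE (PI y)) (- h (PI y) * EE (PI y))).
  apply (is_derive_comp EE PI y). apply E_deriv; auto. apply Pinv_deriv; auto.
  unfold scal; simpl; unfold mult; simpl. field. lra.
Qed.


Lemma part3 : (exists eps, 0 < eps /\ forall s, LL - eps < s < LL -> ex_derive GG s) /\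
   filterlim (Derive GG) (at_left LL) (Rbar_locally m_infty).
Proof. split.
  - exists LL. split. apply L_pos. intros s Hs. eexists. apply g_deriv. lra.
  - intros P [M HM].
    assert (Hb := Hblow (fun y => - M < y) (ex_intro _ (-M) (fun x Hx => Hx))).
    destruct Hb as [d Hd]. simpl in Hd.
    set (t1 := Rmax (sigma - d/2) (sigma/2)).
    pose proof (cond_pos d).
    assert (Ht1 : sigma/2 <= t1 < sigma). { unfold t1. split. apply Rmax_r. apply Rmax_lub_lt; lra. }
    assert (Ht1' : sigma - d/2 <= t1) by apply Rmax_l.
    assert (HP : PP t1 < LL) by (apply P_lt; lra).
    assert (HP0 : 0 <= PP t1) by (rewrite <- P_0; apply P_le; lra).
    assert (Hr : 0 < LL - PP t1) by lra.
    exists (mkposreal _ Hr). intros x Hx Hxl. simpl in Hx. apply ball_R in Hx. apply Rabs_lt_iff in Hx. simpl in Hx.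
    assert (Hx0 : 0 < x < LL) by lra.
    assert (Ht : t1 < PI x) by (apply Pinv_gt_of; lra).
    assert (Ht2 : PI x < sigma) by (apply Pinv_ltsig; lra).
    rewrite (is_derive_unique _ _ _ (g_deriv x Hx0)). apply HM.
    assert (Hb : ball sigma d (PI x)). { apply ball_R. rewrite Rabs_left by lra. lra. }
    specialize (Hd _ Hb Ht2). lra.
Qed.


Definition GI (t : R) : R := RInt GG t LL.
Definition phi t := / sqrt (GI t).

Lemma GI_split x t : 0 <= x <= t -> t <= LL -> GI x = RInt GG x t + GI t.
Proof. intros. unfold GI. apply RInt_Chasles_R. apply g_int; lra. apply g_int; lra. Qed.

Lemma GI_pos t : 0 <= t < LL -> 0 < GI t.
Proof. intros Ht. set (m := (t + LL) / 2).
  rewrite (GI_split t m) by (unfold m; lra).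
  assert (GG m * (m - t) <= RInt GG t m). apply RInt_lb. unfold m; lra. apply g_int; unfold m; lra.
    intros x Hx. apply g_decr; unfold m in *; lra.
  assert (0 <= GI m). apply RInt_ge_0. unfold m; lra. apply g_int; unfold m; lra. intros; apply g_nonneg.
  assert (0 < GG m * (m - t)). apply Rmult_lt_0_compat. apply g_pos; unfold m; lra. unfold m; lra.
  lra. Qed.

Lemma GI_lip x t : 0 <= x <= LL -> 0 <= t <= LL -> Rabs (GI x - GI t) <= 1 * Rabs (x - t).
Proof. intros Hx Ht. destruct (Rle_dec x t).
  - rewrite (GI_split x t) by lra. assert (Ee : forall u v : R, u + v - v = u) by (intros; ring). rewrite Ee.
    rewrite <- (Rabs_Ropp (x - t)), Ropp_minus_distr.
    apply RInt_abs_bound. apply g_int; lra. intros z Hz. rewrite Rmin_left, Rmax_right in Hz by lra.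
    rewrite Rabs_right. apply g_le1; lra. apply Rle_ge, g_nonneg.
  - rewrite (GI_split t x) by lra. assert (Ee : forall u v : R, v - (u + v) = - u) by (intros; ring). rewrite Ee.
    rewrite Rabs_Ropp. apply RInt_abs_bound. apply g_int; lra. intros z Hz. rewrite Rmin_left, Rmax_right in Hz by lra.
    rewrite Rabs_right. apply g_le1; lra. apply Rle_ge, g_nonneg.
Qed.

Lemma phi_WC b : 0 <= b < LL -> WCon phi 0 b.
Proof. intros Hb z Hz. unfold phi.
  apply (WC_comp_cont GI (fun v => / sqrt v)).
  - apply WC_sub with 0 LL; try lra. apply Lip_WC with 1. lra. apply GI_lip. lra.
  - pose proof (GI_pos z ltac:(lra)).
    apply continuous_Rinv_comp. apply continuous_sqrt. apply Rgt_not_eq. apply sqrt_lt_R0. auto.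
Qed.

Lemma phi_int a b : 0 <= a <= b -> b < LL -> ex_RInt phi a b.
Proof. intros. apply WC_ex_RInt. lra. apply WCon_sub with 0 b; try lra. apply phi_WC. lra. Qed.

Lemma phi_int_any a b : 0 <= a < LL -> 0 <= b < LL -> ex_RInt phi a b.
Proof. intros. destruct (Rle_dec a b). apply phi_int; lra. apply ex_RInt_swap. apply phi_int; lra. Qed.

Lemma phi_cont t : 0 < t < LL -> continuous phi t.
Proof. intros. apply WC_cont_int with 0 ((t + LL)/2). lra. apply phi_WC; lra. Qed.

Lemma phi_pos t : 0 <= t < LL -> 0 < phi t.
Proof. intros. unfold phi. apply Rinv_0_lt_compat. apply sqrt_lt_R0. apply GI_pos; auto. Qed.


Definition cc := Rmin (1/2) (/ (8 * C)).

Lemma cc_pos : 0 < cc.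
Proof. unfold cc. apply Rmin_pos. lra. apply Rinv_0_lt_compat. lra. Qed.

Lemma key : exists t1, 0 < t1 < sigma /\ forall t, PP t1 <= t < LL ->
  phi t <= exp 1 / sqrt cc * (/ EE (PI t) * Rpower (sigma - PI t) (- (gamma / 2))).
Proof.
  destruct h_lower as [t1 [Ht1 [Ht1' Hb]]]. exists t1. split; auto.
  intros t Ht.
  assert (HPt1 : 0 <= PP t1) by (rewrite <- P_0; apply P_le; lra).
  destruct (Pinv_spec t ltac:(lra)) as [Htau Hpt].
  assert (Htau1 : t1 <= PI t). { rewrite <- (Pinv_P t1) by lra. apply Pinv_le; lra. }
  assert (Htau2 : PI t < sigma) by (apply Pinv_ltsig; lra).
  set (tau := PI t) in *. set (u := sigma - tau).
  assert (Hu : 0 < u <= 1) by (unfold u; lra).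
  set (p := Rpower u gamma).
  assert (Hp : 0 < p) by apply pw_pos.
  assert (Hpu : p <= u) by (apply pw_le_u; auto).
  pose proof cc_pos as Hc.
  assert (Hc2 : cc <= 1/2) by apply Rmin_l.
  assert (Hc8 : cc <= / (8 * C)) by apply Rmin_r.
  set (delta := cc * p).
  assert (Hd : 0 < delta) by (unfold delta; apply Rmult_lt_0_compat; auto).
  assert (Hd2 : delta <= u / 2) by (unfold delta; nra).
  set (tau' := tau + delta).
  assert (Htau' : tau' < sigma) by (unfold tau', u in *; lra).
  assert (Htau'0 : tau < tau') by (unfold tau' in *; lra).
  assert (Hh : h tau' <= 8 * C / p).
  { assert (Hr : t1 <= tau' < sigma) by (unfold tau' in *; lra). destruct (Hb tau' Hr) as [_ Hh].
    assert (Hq : p <= 4 * Rpower (sigma - tau') gamma).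
    { apply Rle_trans with (4 * Rpower (u/2) gamma). apply pw_half; lra.
      apply Rmult_le_compat_l. lra. apply pw_le. unfold tau', u in *; lra. }
    pose proof (pw_pos (sigma - tau')).
    eapply Rle_trans. apply Hh. unfold Rdiv. replace (8 * C * / p) with (2 * C * (4 * / p)) by ring.
    apply Rmult_le_compat_l. lra.
    replace (4 * / p) with (/ (p / 4)) by (field; lra).
    apply Rinv_le_contravar; lra. }
  assert (HI : HH tau' - HH tau <= 1).
  { rewrite H_diff by (unfold tau' in *; lra).
    apply Rle_trans with ((8 * C / p) * (tau' - tau)).
    apply RInt_ub. unfold tau' in *; lra. apply h_int; unfold tau' in *; lra.
    intros x Hx. apply Rle_trans with (h tau'). apply h_le; lra. auto.
    replace (tau' - tau) with delta by (unfold tau'; ring). unfold delta.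
    replace (8 * C / p * (cc * p)) with (8 * C * cc) by (field; lra).
    apply Rmult_le_reg_l with (/ (8 * C)). apply Rinv_0_lt_compat; lra.
    rewrite <- Rmult_assoc, Rinv_l, Rmult_1_l, Rmult_1_r by lra. auto. }
  set (A := EE tau * exp (-1)).
  assert (HA : 0 < A) by (unfold A; apply Rmult_lt_0_compat; [apply E_pos; lra | apply exp_pos]).
  assert (HEA : A <= EE tau').
  { unfold A. rewrite !E_lt by lra. rewrite <- exp_plus. apply exp_le'. lra. }
  set (t' := PP tau').
  assert (Ht'1 : A * delta <= t' - t).
  { unfold t'. rewrite <- Hpt. apply Rle_trans with (EE tau' * (tau' - tau)).
    replace (tau' - tau) with delta by (unfold tau'; ring). apply Rmult_le_compat_r; lra.
    apply P_lb; unfold tau' in *; lra. }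
  assert (Ht'2 : t' < LL) by (unfold t', Lval; apply P_lt; lra).
  assert (Hgt' : GG t' = EE tau') by (rewrite g_eq; unfold t'; rewrite Pinv_P; auto; unfold tau' in *; lra).
  assert (HAd : 0 < A * delta) by (apply Rmult_lt_0_compat; auto).
  assert (HGI : delta * A * A <= GI t).
  { rewrite (GI_split t t') by lra.
    assert (0 <= GI t'). apply RInt_ge_0. lra. apply g_int; lra. intros; apply g_nonneg.
    assert (GG t' * (t' - t) <= RInt GG t t'). apply RInt_lb. lra. apply g_int; lra.
      intros x Hx. apply g_decr; lra.
    rewrite Hgt' in H0.
    assert (A * (A * delta) <= EE tau' * (t' - t)). apply Rmult_le_compat; nra.
    nra. }
  assert (Hsd : sqrt (delta * A * A) = sqrt cc * sqrt p * A).
  { rewrite Rmult_assoc, sqrt_mult, sqrt_square by nra. unfold delta. rewrite sqrt_mult by lra. ring. }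
  assert (Hsp : Rpower u (- (gamma / 2)) = / sqrt p).
  { rewrite Rpower_Ropp. f_equal. unfold p. rewrite <- Rpower_sqrt by auto. rewrite Rpower_mult.
    f_equal. }
  assert (Hspos : 0 < sqrt p) by (apply sqrt_lt_R0; auto).
  assert (Hscpos : 0 < sqrt cc) by (apply sqrt_lt_R0; auto).
  fold u. rewrite Hsp. unfold phi.
  apply Rle_trans with (/ sqrt (delta * A * A)).
  { apply Rinv_le_contravar. rewrite Hsd. apply Rmult_lt_0_compat; auto. apply Rmult_lt_0_compat; auto.
    apply sqrt_le_1; try nra. }
  rewrite Hsd. unfold A. replace (exp (-1)) with (/ exp 1) by (rewrite <- exp_Ropp; f_equal; lra). right. assert (0 < EE tau) by (apply E_pos; lra). pose proof (exp_pos 1).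
  field. repeat split; lra.
Qed.


Definition aa := 1 - gamma / 2.
Definition Phi t := (- / aa) * Rpower (sigma - PI t) aa.

Lemma aa_pos : 0 < aa.
Proof. unfold aa. lra. Qed.

Lemma Phi_deriv t : 0 < t < LL -> is_derive Phi t (/ EE (PI t) * Rpower (sigma - PI t) (- (gamma / 2))).
Proof. intros Ht.
  assert (Ht' : 0 < PI t < sigma). split. apply Pinv_pos; lra. apply Pinv_ltsig; lra.
  assert (D1 : is_derive (fun w => Rpower w aa) (sigma - PI t) (aa * Rpower (sigma - PI t) (aa - 1))).
  { apply is_derive_Reals. apply derivable_pt_lim_power. lra. }
  assert (D2 : is_derive (fun v => sigma - v) (PI t) (-1)).
  { auto_derive. auto. ring. }
  pose proof (is_derive_comp _ _ _ _ _ D1 D2) as D3.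
  pose proof (is_derive_comp _ _ _ _ _ D3 (Pinv_deriv t Ht)) as D4.
  pose proof (is_derive_scal _ _ (- / aa) _ D4) as D5.
  unfold Phi. simpl in D5.
  replace (/ EE (PI t) * Rpower (sigma - PI t) (- (gamma / 2))) with
     (- / aa * scal (/ EE (PI t)) (scal (-1) (aa * Rpower (sigma - PI t) (aa - 1)))).
  exact D5.
  unfold scal; simpl; unfold mult; simpl.
  replace (aa - 1) with (- (gamma / 2)) by (unfold aa; ring).
  pose proof aa_pos. assert (0 < EE (PI t)) by (apply E_pos; lra). field. split; lra.
Qed.

Lemma Phi_nonpos t : Phi t <= 0.
Proof. unfold Phi. pose proof aa_pos. assert (0 < Rpower (sigma - PI t) aa) by (unfold Rpower; apply exp_pos).
  assert (0 < / aa) by (apply Rinv_0_lt_compat; auto). nra. Qed.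

Lemma RInt_point_R (f : R -> R) a : RInt f a a = 0.
Proof. rewrite RInt_point. reflexivity. Qed.

Lemma bound_int : exists t0 M0, 0 < t0 < LL /\ forall b, t0 <= b < LL -> RInt phi t0 b <= M0.
Proof.
  destruct key as [t1 [Ht1 Hkey]].
  set (t0 := PP t1). set (K := 2 * (exp 1 / sqrt cc)).
  assert (Ht0 : 0 < t0 < LL). { unfold t0. split. rewrite <- P_0. apply P_lt; lra. unfold Lval; apply P_lt; lra. }
  assert (HK : 0 < K). { unfold K. pose proof (exp_pos 1). pose proof (sqrt_lt_R0 cc cc_pos).
    apply Rmult_lt_0_compat. lra. apply Rdiv_lt_0_compat; auto. }
  exists t0, (K * (- Phi t0)). split; auto.
  intros b Hb. pose proof (Phi_nonpos t0). pose proof (Phi_nonpos b).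
  destruct (Req_dec b t0) as [->|Hbt]. { rewrite RInt_point_R. nra. }
  set (F := fun x => minus (K * Phi x) (RInt phi t0 x)).
  set (dF := fun x => minus (K * (/ EE (PI x) * Rpower (sigma - PI x) (- (gamma / 2)))) (phi x)).
  assert (HF : F t0 < F b).
  { apply (incr_function_le F (Finite t0) (Finite b) dF); simpl; try lra.
    - intros x Hx1 Hx2. unfold F, dF. apply (@is_derive_minus R_AbsRing R_NormedModule (fun x => K * Phi x) (fun x => RInt phi t0 x)).
      + apply is_derive_scal. apply Phi_deriv. lra.
      + apply is_derive_RInt with t0.
        * assert (Hp : 0 < Rmin x (LL - x)) by (apply Rmin_pos; lra).
          exists (mkposreal _ Hp). intros y Hy.
          assert (Hy2 : Rabs (y - x) < Rmin x (LL - x)) by (apply ball_R in Hy; exact Hy).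
          pose proof (Rmin_l x (LL - x)). pose proof (Rmin_r x (LL - x)). apply Rabs_def2 in Hy2.
          apply RInt_correct_R. apply phi_int_any; lra.
        * apply phi_cont. lra.
    - intros x Hx1 Hx2. unfold dF. unfold minus, plus, opp; simpl.
      assert (Hxx : PP t1 <= x < LL) by (unfold t0 in *; lra). specialize (Hkey x Hxx).
      assert (Hx' : 0 < PI x < sigma). split. apply Pinv_pos; lra. apply Pinv_ltsig; lra.
      assert (0 < / EE (PI x) * Rpower (sigma - PI x) (- (gamma / 2))).
      { apply Rmult_lt_0_compat. apply Rinv_0_lt_compat, E_pos; lra. unfold Rpower; apply exp_pos. }
      assert (0 < exp 1 / sqrt cc). { pose proof (exp_pos 1). pose proof (sqrt_lt_R0 cc cc_pos). apply Rdiv_lt_0_compat; auto. }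
      unfold K. nra. }
  unfold F in HF. unfold minus, plus, opp in HF; simpl in HF. rewrite RInt_point_R in HF. nra.
Qed.


Lemma part4 : ex_RInt_gen phi (at_point 0) (at_left LL).
Proof.
  destruct bound_int as [t0 [M0 [Ht0 Hb]]].
  pose proof L_pos as HL.
  assert (HM0 : 0 <= M0). { specialize (Hb t0 ltac:(lra)). rewrite RInt_point_R in Hb. lra. }
  set (I := fun b => RInt phi 0 b).
  assert (Imono : forall b b', 0 <= b <= b' -> b' < LL -> I b <= I b').
  { intros b b' H1 H2. unfold I. rewrite (RInt_Chasles_R phi 0 b b').
    assert (0 <= RInt phi b b'). apply RInt_ge_0. lra. apply phi_int; lra. intros x Hx. left; apply phi_pos; lra.
    lra. apply phi_int; lra. apply phi_int; lra. }
  assert (Ibound : forall b, 0 <= b < LL -> I b <= I t0 + M0).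
  { intros b Hb'. destruct (Rle_dec b t0).
    - pose proof (Imono b t0 ltac:(lra) ltac:(lra)). lra.
    - unfold I. rewrite (RInt_Chasles_R phi 0 t0 b). specialize (Hb b ltac:(lra)). lra.
      apply phi_int; lra. apply phi_int; lra. }
  set (S := fun v => exists b, 0 <= b < LL /\ v = I b).
  destruct (completeness S) as [l [Hub Hlub]].
  { exists (I t0 + M0). intros v [b [Hb' ->]]. apply Ibound; auto. }
  { exists (I 0). exists 0. split; auto. lra. }
  exists l. apply filterlimi_locally. intros eps.
  assert (Hex : exists b0, 0 <= b0 < LL /\ l - eps < I b0).
  { destruct (classic (exists b0, 0 <= b0 < LL /\ l - eps < I b0)) as [H|H]; auto.
    exfalso. assert (l <= l - eps).
    { apply Hlub. intros v [b [Hb' ->]]. destruct (Rle_dec (I b) (l - eps)); auto.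
      exfalso; apply H. exists b. split; auto. lra. }
    pose proof (cond_pos eps). lra. }
  destruct Hex as [b0 [Hb0 Hb0']].
  apply Filter_prod with (fun x => x = 0) (fun y => b0 <= y < LL).
  - reflexivity.
  - assert (Hr : 0 < LL - b0) by lra. exists (mkposreal _ Hr). intros y Hy Hyl.
    apply ball_R in Hy. apply Rabs_lt_iff in Hy. simpl in Hy. lra.
  - intros x y -> Hy. exists (I y). split.
    + simpl. apply RInt_correct_R. apply phi_int; lra.
    + apply ball_R. assert (I y <= l) by (apply Hub; exists y; split; auto; lra).
      pose proof (Imono b0 y ltac:(lra) ltac:(lra)). apply Rabs_def1; lra.
Qed.

End Main.

Theorem lemma4p1 (sigma : R) (h : R -> R) (gamma C : R)
  (Hsigma : 0 < sigma)
  (Hpos : forall s, 0 <= s < sigma -> 0 <= h s)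
  (Hcont0 : filterlim h (at_right 0) (locally (h 0)))
  (Hcont : forall s, 0 < s < sigma -> continuous h s)
  (Hincr : forall s t, 0 <= s -> s < t -> t < sigma -> h s < h t)
  (Hblow : filterlim h (at_left sigma) (Rbar_locally p_infty))
  (Hgamma : 1 <= gamma < 2)
  (HC : 0 < C)
  (Hasym : filterlim (fun s => Rpower (sigma - s) gamma * h s)
                     (at_left sigma) (locally C)) :
  let L := Lval h sigma in
  let g := gf h sigma in
  (* (i) *)
  (g 0 = 1 /\ g L = 0) /\
  (* (ii) g is decreasing on [0, L] *)
  (forall x y, 0 <= x -> x < y -> y <= L -> g y < g x) /\
  (* (iii) g is differentiable near L^- and g'(s) -> -oo as s -> L^- *)
  ((exists eps, 0 < eps /\ forall s, L - eps < s < L -> ex_derive g s) /\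
   filterlim (Derive g) (at_left L) (Rbar_locally m_infty)) /\
  (* (iv) the improper integral int_0^L dt / sqrt(int_t^L g) converges *)
  ex_RInt_gen (fun t => / sqrt (RInt g t L)) (at_point 0) (at_left L).
Proof.
  cbv zeta. split; [split|split; [|split]].
  - eapply (g_0 sigma h gamma C); eauto.
  - eapply (g_L sigma h gamma C); eauto.
  - intros x y Hx Hxy Hy. eapply (g_sdecr sigma h gamma C); eauto.
  - eapply (part3 sigma h gamma C); eauto.
  - eapply (part4 sigma h gamma C); eauto.
Qed.
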